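(* Let $r \ge 1$, and for $i=1,\dots,r$ let $a_i = n_i\sigma_i > 0$ and $s_i \ge 0$ be the current sample size of stratum $i$. Let $Q[1..r]$ be an array of triples $(x,y,z)$ with $Q[i]$ initialized to $(i,\, n_i\sigma_i,\, s_i/(n_i\sigma_i))$, and then sorted in ascending order of the $z$ component (ties broken arbitrarily). Let $M > 0$ be any memory budget. If at least one stratum is not oversized under budget $M$, then the set of strata that are not oversized under budget $M$ is exactly $\{Q[1].x, Q[2].x, \dots, Q[p].x\}$ for some $p \in \{1,\dots,r\}$, i.e. it occupies a contiguous prefix of the sorted array $Q$.
   Context: Under a memory budget $M$, the Neyman allocation size of stratum $i$ is $M_i = M\cdot n_i\sigma_i/\sum_{j=1}^r n_j\sigma_j$. Stratum $i$ (with current sample size $s_i$) is called oversized under budget $M$ if $s_i > M_i$, and not oversized otherwise. *)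

(* Defs.v *)
From mathcomp Require Import all_boot all_order all_algebra.
Set Implicit Arguments. Unset Strict Implicit. Unset Printing Implicit Defensive.
Import Order.TTheory GRing.Theory Num.Theory.
Local Open Scope ring_scope.

(* Strata are indexed by 'I_r; nn i = n_i (stratum size), sigma i = sigma_i,
   s i = current sample size of stratum i. *)

Definition neyman (R : realFieldType) (r : nat) (nn : 'I_r -> nat)
  (sigma : 'I_r -> R) (M : R) (i : 'I_r) : R :=
  M * ((nn i)%:R * sigma i) / \sum_(j < r) (nn j)%:R * sigma j.

Definition oversized (R : realFieldType) (r : nat) (nn : 'I_r -> nat)
  (sigma : 'I_r -> R) (s : 'I_r -> R) (M : R) (i : 'I_r) : bool :=
  neyman nn sigma M i < s i.

Definition Q_init (R : realFieldType) (r : nat) (nn : 'I_r -> nat)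
  (sigma : 'I_r -> R) (s : 'I_r -> R) : seq ('I_r * R * R) :=
  [seq (i, (nn i)%:R * sigma i, s i / ((nn i)%:R * sigma i)) | i <- enum 'I_r].

Definition z_le (R : realFieldType) (r : nat) (u v : 'I_r * R * R) : bool :=
  u.2 <= v.2.

(* Main.v *)
Require Import Defs.
From mathcomp Require Import all_boot all_order all_algebra.
Import Order.TTheory GRing.Theory Num.Theory.
Local Open Scope ring_scope.

Lemma take_count_sorted {T : eqType} (e : rel T) (P : pred T) (s : seq T) :
  transitive e -> (forall u v, e u v -> P v -> P u) ->
  sorted e s -> take (count P s) s = filter P s.
Proof.
move=> tr mono; elim: s => [|x s IH] //= Hs.
have Hs' := path_sorted Hs.
have Hall := order_path_min tr Hs.
case Px: (P x) => /=.
  by rewrite IH.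
have hasF : ~~ has P s.
  apply/hasPn => y ys; apply/negP => Py.
  by move: (allP Hall y ys) => exy; rewrite (mono _ _ exy Py) in Px.
have cnt : count P s = 0%N by move: hasF; rewrite has_count lt0n negbK => /eqP.
move: hasF; rewrite has_filter negbK => /eqP ->.
by rewrite cnt.
Qed.

Theorem lemma4 (R : realFieldType) (r : nat) (nn : 'I_r -> nat)
  (sigma : 'I_r -> R) (s : 'I_r -> R) (M : R)
  (Q : seq ('I_r * R * R)) :
  (0 < r)%N ->
  (forall i, 0 < (nn i)%:R * sigma i) ->
  (forall i, 0 <= s i) ->
  perm_eq Q (Q_init nn sigma s) ->
  sorted (@z_le R r) Q ->
  0 < M ->
  (exists i, ~~ oversized nn sigma s M i) ->
  exists2 p : nat, (0 < p <= r)%N &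
    forall i : 'I_r,
      (~~ oversized nn sigma s M i) = (i \in [seq u.1.1 | u <- take p Q]).
Proof.
move=> r0 apos s0 pQ sQ M0 [i0 Hi0].
set S := \sum_(j < r) (nn j)%:R * sigma j.
have S0 : 0 < S.
  rewrite /S (bigD1 (Ordinal r0)) //=; apply: ltr_pwDl; first exact: apos.
  by apply: sumr_ge0 => j _; apply: ltW; apply: apos.
set c := M / S.
pose P := fun u : 'I_r * R * R => u.2 <= c.
have key : forall i, ~~ oversized nn sigma s M i = (s i / ((nn i)%:R * sigma i) <= c).
  move=> i; rewrite /oversized /neyman -leNgt ler_pdivrMr ?apos //.
  by congr (_ <= _); rewrite /c mulrAC.
have tr : transitive (@z_le R r) by move=> b a d; rewrite /z_le; apply: le_trans.
have mono : forall u v, z_le u v -> P v -> P u by move=> u v; rewrite /z_le /P; apply: le_trans.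
have Htake := @take_count_sorted _ _ P Q tr mono sQ.
have inQ : forall i, (i, (nn i)%:R * sigma i, s i / ((nn i)%:R * sigma i)) \in Q.
  by move=> i; rewrite (perm_mem pQ) /Q_init; apply: map_f; rewrite mem_enum.
have memE : forall i, (~~ oversized nn sigma s M i) = (i \in [seq u.1.1 | u <- filter P Q]).
  move=> i; rewrite key; apply/idP/idP => H.
    apply/mapP; exists (i, (nn i)%:R * sigma i, s i / ((nn i)%:R * sigma i)) => //.
    by rewrite mem_filter inQ andbT.
  case/mapP: H => u; rewrite mem_filter => /andP [Pu uQ] ->.
  move: uQ; rewrite (perm_mem pQ) /Q_init => /mapP [j _ uj].
  by move: Pu; rewrite uj.
exists (count P Q); last by move=> i; rewrite Htake memE.
apply/andP; split.
  rewrite -size_filter lt0n size_eq0; apply/eqP => E.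
  by move: (memE i0); rewrite Hi0 E.
by rewrite (leq_trans (count_size _ _)) // (perm_size pQ) /Q_init size_map size_enum_ord.
Qed.
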